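(* Let $n\ge3$ be an integer such that $n+1$ is a perfect square, and let $q\le n$ be a prime with $q>\frac{2n}{3}$ and $q\equiv3\pmod 4$. Then $R_{(n,n)}(x)$ has no factor in $\mathbb{Z}[x]$ whose degree lies in the interval $[q,n]$.
   Context: $\mathrm{He}_k(x)$ denotes the monic probabilists' Hermite polynomial of degree $k$. For a partition $\lambda=(\lambda_1\ge\dots\ge\lambda_r\ge0)$ the degree sequence is $n_\lambda=(\lambda_r,\lambda_{r-1}+1,\dots,\lambda_1+r-1)$ and $\mathrm{He}_\lambda=\mathrm{Wr}[\mathrm{He}_{n_1},\dots,\mathrm{He}_{n_r}]/\prod_{i<j}(n_j-n_i)$. The $2$-core of $\lambda$ is obtained by successively replacing entries $a$ of $n_\lambda$ by $a-2\ge 0$ not already in $n_\lambda$ until impossible; $\mathrm{He}_\lambda(x)=x^{|\bar\lambda|}R_\lambda(x)$ with $R_\lambda(0)\ne0$. For $\lambda=(n,n)$ the $2$-core is empty, so $R_{(n,n)}=\mathrm{He}_{(n,n)}=\mathrm{Wr}[\mathrm{He}_n,\mathrm{He}_{n+1}]$, a monic integer polynomial of degree $2n$. *)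

(* Defs.v *)
From mathcomp Require Import all_boot all_order all_algebra.
Set Implicit Arguments. Unset Strict Implicit. Unset Printing Implicit Defensive.
Import GRing.Theory.
Local Open Scope ring_scope.

(* Pair (He_k, He_{k+1}) of monic probabilists' Hermite polynomials over int,
   via He_0 = 1, He_1 = x, He_{k+1} = x He_k - k He_{k-1}. *)
Fixpoint hermite_pair (k : nat) : {poly int} * {poly int} :=
  match k with
  | 0%N => (1, 'X)
  | k'.+1 => let: (a, b) := hermite_pair k' in (b, 'X * b - (k'.+1)%:R *: a)
  end.

Definition He (k : nat) : {poly int} := (hermite_pair k).1.

Definition Wr2 (f g : {poly int}) : {poly int} := f * g^`() - f^`() * g.

(* R_{(n,n)} = He_{(n,n)} = Wr[He_n, He_{n+1}] (normalising product = 1) *)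
Definition R_nn (n : nat) : {poly int} := Wr2 (He n) (He n.+1).

Definition divides_in_Zx (p P : {poly int}) : Prop := exists r : {poly int}, P = p * r.

(* Main.v *)
Require Import Defs.
From mathcomp Require Import all_boot all_order all_algebra all_field.
From mathcomp Require Import ring lra zify.
Import GRing.Theory.
Set Implicit Arguments. Unset Strict Implicit.
Local Open Scope ring_scope.

Definition df (j : nat) : nat := (\prod_(i < j) (2 * i + 1))%N.

Lemma dfS j : df j.+1 = (df j * (2 * j + 1))%N.
Proof. by rewrite /df big_ord_recr. Qed.

Lemma df0 : df 0 = 1%N.
Proof. by rewrite /df big_ord0. Qed.

Definition cH (k d : nat) : int :=
  if (d <= k)%N && ~~ odd (k - d) then
    (-1) ^+ ((k - d)./2) * (('C(k, d) * df ((k - d)./2))%N)%:Z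
  else 0.

Lemma cH_gt k d : (k < d)%N -> cH k d = 0.
Proof. by move=> h; rewrite /cH leqNgt h. Qed.

Lemma cH_odd k d : odd (k + d) -> cH k d = 0.
Proof.
move=> h; rewrite /cH; case: leqP => //= hd.
have -> : k = ((k - d) + d)%N by rewrite subnK.
rewrite addnK; move: h; rewrite -{1}(subnK hd) -addnA oddD addnn odd_double.
by case: odd.
Qed.

Lemma cH_eq d j : cH (d + j.*2) d = (-1) ^+ j * (('C(d + j.*2, d) * df j)%N)%:Z.
Proof.
by rewrite /cH leq_addr /= (addKn d) odd_double /= doubleK.
Qed.

Lemma cH_cases k d : [\/ (k < d)%N, odd (k + d) | exists j, k = (d + j.*2)%N].
Proof.
case: (ltnP k d) => hkd; first by constructor 1.
case ho: (odd (k + d)); first by constructor 2.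
constructor 3; exists ((k - d)./2).
have e := odd_double_half (k - d).
rewrite oddB // in e.
move: ho; rewrite oddD => ho.
have h2 : odd k (+) odd d = false by move: ho; case: (odd k); case: (odd d).
rewrite h2 add0n in e; rewrite e; by rewrite subnKC.
Qed.

Lemma He0 : He 0 = 1. Proof. by []. Qed.
Lemma He1 : He 1 = 'X. Proof. by []. Qed.
Lemma HeS k : He k.+1 = (hermite_pair k).2.
Proof. by rewrite /He /=; case: (hermite_pair k). Qed.
Lemma He_rec k : He k.+2 = 'X * He k.+1 - (k.+1)%:R *: He k.
Proof. by rewrite HeS /= HeS /He; case: (hermite_pair k). Qed.

Lemma cH_diag k : cH k k = 1.
Proof. by have := cH_eq k 0; rewrite addn0 binn df0 => ->. Qed.

Lemma cH_rec k d :
  cH k.+2 d = (if d == 0%N then 0 else cH k.+1 d.-1) - (k.+1)%:R * cH k d.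
Proof.
case: (cH_cases k.+2 d) => [h|h|[j hj]].
- rewrite !cH_gt; try lia. by case: eqP; rewrite mulr0 subr0.
- rewrite (cH_odd h) (@cH_odd k d); last by move: h; rewrite !oddD /=; case: odd.
  case: d h => [|d] h /=; first by rewrite mulr0 subr0.
  rewrite cH_odd ?mulr0 ?subr0 //. by move: h; rewrite !addSn addnS /= negbK.
- case: d hj => [|d] hj.
  + case: j hj => [|j] hj //.
    have hk : k = (0 + j.*2)%N by rewrite doubleS in hj; lia.
    rewrite /= hk cH_eq -hk hj cH_eq dfS !bin0 !mul1n.
    have -> : (k.+1 = 2 * j + 1)%N by lia.
    rewrite exprS natz !PoszM !PoszD ?PoszM; ring.
  + case: j hj => [|j] hj.
    * have hk : k.+1 = d by lia.
      rewrite /= -hk (cH_gt (ltnW (ltnSn k.+1))) mulr0 subr0.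
      by rewrite !cH_diag.
    * have hk : k = (d.+1 + j.*2)%N by rewrite doubleS in hj; lia.
      have hk1 : k.+1 = (d + j.+1.*2)%N by rewrite doubleS; lia.
      have e1 : cH k.+2 d.+1 = (-1)^+j.+1 * (('C(k.+2,d.+1) * df j.+1)%N)%:Z.
        by rewrite {1}hj cH_eq -hj.
      have e2 : cH k.+1 d = (-1)^+j.+1 * (('C(k.+1,d) * df j.+1)%N)%:Z.
        by rewrite {1}hk1 cH_eq -hk1.
      have e3 : cH k d.+1 = (-1)^+j * (('C(k,d.+1) * df j)%N)%:Z.
        by rewrite {1}hk cH_eq -hk.
      have e := mul_bin_down k.+1 d.+1.
      have hs : (k.+1 - d.+1 = 2 * j + 1)%N by lia.
      rewrite hs /= in e.
      have eZ : (k.+1%:Z * 'C(k, d.+1)%:Z = (2*j+1)%:Z * 'C(k.+1,d.+1)%:Z)%R.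
        by rewrite -!PoszM e.
      rewrite /= e1 e2 e3 binS dfS natz !PoszM !PoszD ?PoszM.
      apply/eqP; rewrite -subr_eq0 exprS; apply/eqP.
      transitivity ((-1)^+j * (df j)%:Z * (k.+1%:Z * 'C(k, d.+1)%:Z - (2*j+1)%:Z * 'C(k.+1,d.+1)%:Z)).
        rewrite !PoszD ?PoszM. ring.
      by rewrite eZ subrr mulr0.
Qed.


Lemma He_coef k d : (He k)`_d = cH k d.
Proof.
move: d.
suff: (forall d, (He k)`_d = cH k d) /\ (forall d, (He k.+1)`_d = cH k.+1 d) by case=> h _ d; exact: h.
elim: k => [|k [IH1 IH2]].
  split=> d.
  - rewrite He0 coefC; case: d => [|d] /=; first by rewrite cH_diag.
    by rewrite cH_gt.
  - rewrite He1 coefX; case: d => [|[|d]] /=.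
    + by rewrite cH_odd.
    + by rewrite cH_diag.
    + by rewrite cH_gt.
split=> // d.
rewrite He_rec coefB coefXM coefZ IH1 cH_rec.
by case: d => [|d] //=; rewrite IH2.
Qed.

Lemma prime_dvd_fact p n : prime p -> (p %| n`!)%N = (p <= n)%N.
Proof.
move=> pp; elim: n => [|n IH].
  by rewrite fact0 dvdn1 leqNgt prime_gt0 //; case: eqP pp => // ->.
rewrite factS Euclid_dvdM // IH.
case: (leqP p n) => h; first by rewrite orbT; apply/esym; apply: leqW.
rewrite orbF; apply/idP/idP => [/dvdn_leq|]; first by move=> /(_ isT) h2; lia.
move=> h2; have -> : p = n.+1 by lia. exact: dvdnn.
Qed.

Lemma dvd_small q x : (0 < x)%N -> (x < 2 * q)%N -> (q %| x)%N = (x == q).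
Proof.
move=> h1 h2; apply/idP/eqP => [/dvdnP [c hc]|->]; last exact: dvdnn.
subst x; case: c h1 h2 => [|[|c]] //=; [by rewrite mul1n | lia].
Qed.

Lemma DF1 q j : prime q -> odd q -> (j <= q)%N -> (q %| df j)%N = (q./2 < j)%N.
Proof.
move=> pq oq; elim: j => [|j IH] hj.
  rewrite df0 dvdn1 ltn0; apply/negbTE; apply/eqP=> e; by rewrite e in pq.
rewrite dfS Euclid_dvdM // IH ?(ltnW hj) // dvd_small; [|lia|lia].
have e := odd_double_half q; rewrite oq in e.
case: (ltnP q./2 j) => h.
  by rewrite orTb; apply/esym; apply: leqW.
rewrite orFb; apply/eqP/idP => h2; lia.
Qed.

Lemma DF2 q j : prime q -> odd q -> (j <= q)%N -> ~~ (q * q %| df j)%N.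
Proof.
move=> pq oq; elim: j => [|j IH] hj.
  rewrite df0 dvdn1 muln_eq1 andbb; apply/eqP=> e; by rewrite e in pq.
have e := odd_double_half q; rewrite oq in e.
rewrite dfS.
case: (eqVneq j q./2) => hjq.
  have -> : (2 * j + 1 = q)%N by lia.
  rewrite dvdn_pmul2r ?prime_gt0 // DF1 //; [by rewrite hjq ltnn | lia].
apply/negP => h; move: (IH (ltnW hj)) => /negP; apply.
have cp : coprime (q * q) (2 * j + 1).
  rewrite coprimeMl andbb prime_coprime // dvd_small; [|lia|lia].
  by apply/eqP; lia.
by rewrite -(Gauss_dvdl _ cp).
Qed.

Lemma cH_dvd q k d : prime q -> odd q -> (q <= k)%N -> (k < 2 * q)%N -> (d < q)%N ->
  (q%:Z %| cH k d)%Z.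
Proof.
move=> pq oq h1 h2 h3.
case: (cH_cases k d) => [h|h|[j hj]]; first by rewrite cH_gt.
  by rewrite cH_odd.
rewrite hj cH_eq -hj; apply: dvdz_mull.
rewrite dvdzE /=.
have e := odd_double_half q; rewrite oq in e.
case: (ltnP q./2 j) => hq.
  by apply: dvdn_mull; rewrite DF1 //; lia.
apply: dvdn_mulr.
have hb := bin_fact (leq_addr j.*2 d).
rewrite -hj in hb.
have : (q %| k`!)%N by rewrite prime_dvd_fact.
rewrite -hb Euclid_dvdM // Euclid_dvdM // !prime_dvd_fact //.
have -> : (k - d = j.*2)%N by lia.
rewrite (leqNgt q d) h3 /=.
have -> : (q <= j.*2)%N = false by apply/negbTE; rewrite -ltnNge; lia.
by rewrite orbF.
Qed.

Lemma scale_dvd (z : int) (p : {poly int}) :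
  (forall i, (z %| p`_i)%Z) -> exists E, p = z%:P * E.
Proof.
move=> h; exists (\poly_(i < size p) (p`_i %/ z)%Z).
apply/polyP => i; rewrite coefCM coef_poly; case: ltnP => hi.
  by rewrite mulrC divzK.
by rewrite mulr0 nth_default.
Qed.

Lemma He_q q : prime q -> odd q -> exists E, He q = 'X^q + (q%:Z)%:P * E.
Proof.
move=> pq oq.
have [E hE] : exists E, He q - 'X^q = (q%:Z)%:P * E.
  apply: scale_dvd => i; rewrite coefB coefXn He_coef.
  case: (ltngtP i q) => h.
  - rewrite subr0; apply: cH_dvd => //.
    have := prime_gt0 pq; lia.
  - by rewrite subr0 cH_gt.
  - by rewrite h cH_diag subrr.
by exists E; rewrite -hE addrC subrK.
Qed.

Lemma He_shift q s : prime q -> odd q ->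
  exists E, He (q + s) = 'X^q * He s + (q%:Z)%:P * E.
Proof.
move=> pq oq.
have [E0 h0] := He_q pq oq.
case: q pq oq E0 h0 => [//|q'] pq oq E0 h0.
set c := (q'.+1%:Z)%:P.
suff: (exists E, He (q'.+1 + s) = 'X^(q'.+1) * He s + c * E) /\
      (exists E, He (q'.+1 + s.+1) = 'X^(q'.+1) * He s.+1 + c * E) by case.
elim: s => [|s [[E1 h1] [E2 h2]]].
  split; first by exists E0; rewrite addn0 He0 mulr1.
  exists ('X * E0 - He q').
  rewrite addn1 He_rec h0 He1 -mul_polyC natz -/c.
  rewrite exprS; ring.
split; first by exists E2.
exists ('X * E2 - c * E1 - (s.+1%:R)%:P * E1 - 'X^(q'.+1) * He s).
have -> : (q'.+1 + s.+2 = (q'.+1 + s).+2)%N by rewrite !addnS.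
rewrite He_rec -addnS h2 h1 He_rec -!mul_polyC.
rewrite natrD rmorphD /= natz -/c.
ring.
Qed.

Lemma Wr_shift (q : nat) (f g h k : {poly int}) :
  let C := (q%:Z)%:P in
  exists S, Wr2 ('X^q * f + C * g) ('X^q * h + C * k) = 'X^(q + q) * Wr2 f h + C * S.
Proof.
move=> C.
set Y := 'X^q; pose Z : {poly int} := 'X^(q.-1).
have dY : Y^`() = C * Z by rewrite /Y derivXn -mulr_natl -polyC_natr natz.
have dC : forall p : {poly int}, (C * p)^`() = C * p^`().
  by move=> p; rewrite derivM derivC mul0r add0r.
exists (Y * f * k^`() + g * (C * Z * h + Y * h^`() + C * k^`()) - Z * f * C * k
        - Y * f^`() * k - g^`() * (Y * h + C * k)).
rewrite /Wr2 !derivD !derivM dY derivC exprD -/Y.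
ring.
Qed.

Lemma R_coef n m : (R_nn n)`_m =
  \sum_(i < m.+1) (cH n i * (cH n.+1 (m - i).+1 *+ (m - i).+1)) -
  \sum_(i < m.+1) ((cH n i.+1 *+ i.+1) * cH n.+1 (m - i)).
Proof.
rewrite /R_nn /Wr2 coefB !coefM.
by congr (_ - _); apply: eq_bigr => i _; rewrite !coef_deriv !He_coef.
Qed.

Lemma odd_aux (a b m : nat) : (b <= m)%N -> odd m -> odd (a + b) || odd (a.+1 + (m - b).+1).
Proof.
move=> hb om; rewrite addSn addnS /= negbK !oddD oddB // om.
by case: (odd a); case: (odd b).
Qed.

Lemma odd_aux2 (a b m : nat) : (b <= m)%N -> odd m -> odd (a + b.+1) || odd (a.+1 + (m - b)).
Proof.
move=> hb om; rewrite addnS addSn /= !oddD oddB // om.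
by case: (odd a); case: (odd b).
Qed.

Lemma R_odd n m : odd m -> (R_nn n)`_m = 0.
Proof.
move=> om; rewrite R_coef big1 ?sub0r ?big1 ?oppr0 // => i _.
- have hi : (i <= m)%N by rewrite -ltnS ltn_ord.
  case/orP: (odd_aux2 n hi om) => h.
    by rewrite (cH_odd h) mul0rn mul0r.
  by rewrite (cH_odd h) mulr0.
- have hi : (i <= m)%N by rewrite -ltnS ltn_ord.
  case/orP: (odd_aux n hi om) => h.
    by rewrite (cH_odd h) mul0r.
  by rewrite (cH_odd h) mul0rn mulr0.
Qed.

Lemma dvdq_mulrn (q j : nat) (x : int) :
  (j <= q)%N -> ((j < q)%N -> (q%:Z %| x)%Z) -> (q%:Z %| x *+ j)%Z.
Proof.
move=> hj hx; case: (ltnP j q) => h.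
  by rewrite -mulr_natr; apply: dvdz_mulr; exact: hx.
have -> : j = q by lia.
by rewrite -mulr_natr natz; apply: dvdz_mull; exact: dvdzz.
Qed.

Lemma R_low q n m : prime q -> odd q -> (q <= n)%N -> (n.+1 < 2 * q)%N -> (m <= q)%N ->
  (q%:Z * q%:Z %| (R_nn n)`_m)%Z.
Proof.
move=> pq oq h1 h2 hm.
case: (ltnP m q) => hmq; last first.
  have -> : m = q by lia. by rewrite R_odd.
rewrite R_coef; apply: rpredB; apply: rpred_sum => i _;
  have hi : (i <= m)%N by rewrite -ltnS ltn_ord.
- apply: dvdz_mul; first by apply: cH_dvd => //; lia.
  apply: dvdq_mulrn; first lia.
  by move=> h; apply: cH_dvd => //; lia.
- apply: dvdz_mul; last by apply: cH_dvd => //; lia.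
  apply: dvdq_mulrn; first lia.
  by move=> h; apply: cH_dvd => //; lia.
Qed.

Lemma R_mod q n : prime q -> odd q -> (q <= n)%N ->
  (forall m, (m < 2 * q)%N -> (q%:Z %| (R_nn n)`_m)%Z) /\
  (q%:Z %| (R_nn n)`_(2 * q) - (Wr2 (He (n - q)) (He (n - q).+1))`_0)%Z.
Proof.
move=> pq oq hqn.
have [E1 e1] := He_shift (n - q) pq oq.
have [E2 e2] := He_shift (n - q).+1 pq oq.
rewrite subnKC // in e1; rewrite addnS subnKC // in e2.
have [S eS] := Wr_shift q (He (n - q)) E1 (He (n - q).+1) E2.
have eR : R_nn n = 'X^(q + q) * Wr2 (He (n - q)) (He (n - q).+1) + (q%:Z)%:P * S.
  by rewrite /R_nn e1 e2 eS.
split.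
  move=> m hm; rewrite eR coefD coefXnM coefCM.
  have -> : (m < q + q)%N by lia.
  by rewrite add0r; apply: dvdz_mulr; exact: dvdzz.
rewrite eR coefD coefXnM coefCM.
have -> : (2 * q < q + q)%N = false by lia.
have -> : (2 * q - (q + q) = 0)%N by lia.
by rewrite addrC addKr; apply: dvdz_mulr; exact: dvdzz.
Qed.

Lemma Wr0 (f g : {poly int}) : (Wr2 f g)`_0 = f`_0 * g`_1 - f`_1 * g`_0.
Proof. by rewrite /Wr2 coefB !coef0M !coef_deriv. Qed.

Lemma cH_ev0 a : cH a.*2 0 = (-1) ^+ a * (df a)%:Z.
Proof. by have := cH_eq 0 a; rewrite add0n bin0 mul1n. Qed.

Lemma cH_od1 a : cH a.*2.+1 1 = (-1) ^+ a * (df a.+1)%:Z.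
Proof.
have := cH_eq 1 a; rewrite add1n bin1 => ->; rewrite dfS; congr (_ * Posz _).
rewrite -mul2n; ring.
Qed.

Lemma cH_ev1 a : cH a.*2 1 = 0.
Proof. by rewrite cH_odd // addn1 /= odd_double. Qed.

Lemma cH_od0 a : cH a.*2.+1 0 = 0.
Proof. by rewrite cH_odd // addn0 /= odd_double. Qed.

Definition W0 k := (Wr2 (He k) (He k.+1))`_0.

Lemma sgsq a : (-1 : int) ^+ a * (-1) ^+ a = 1.
Proof. by rewrite -exprD addnn -mul2n exprM expr2 mulrNN mulr1 expr1n. Qed.

Lemma W0_even a : W0 a.*2 = ((df a * df a.+1)%N)%:Z.
Proof.
rewrite /W0 Wr0 !He_coef cH_ev0 cH_od1 cH_ev1 mul0r subr0 PoszM.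
transitivity ((-1) ^+ a * (-1) ^+ a * ((df a)%:Z * (df a.+1)%:Z)); first ring.
by rewrite sgsq mul1r.
Qed.

Lemma W0_odd a : W0 a.*2.+1 = ((df a.+1 * df a.+1)%N)%:Z.
Proof.
rewrite /W0.
have -> : (a.*2.+2 = (a.+1).*2)%N by rewrite doubleS.
rewrite Wr0 !He_coef cH_ev0 cH_od1 cH_od0 mul0r sub0r PoszM exprS.
transitivity ((-1) ^+ a * (-1) ^+ a * ((df a.+1)%:Z * (df a.+1)%:Z)); first ring.
by rewrite sgsq mul1r.
Qed.

Lemma R0_W0 n : (R_nn n)`_0 = W0 n. Proof. by []. Qed.

Lemma ndvd_mul3 q x y z : prime q -> ~~ (q %| x)%N -> ~~ (q %| y)%N -> ~~ (q %| z)%N ->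
  ~~ (q%:Z %| ((x * y * z)%N)%:Z)%Z.
Proof.
move=> pq hx hy hz; rewrite dvdzE /= !Euclid_dvdM //.
by rewrite (negbTE hx) (negbTE hy) (negbTE hz).
Qed.

Lemma R_sq q n m : prime q -> odd q -> (q <= n)%N -> (n.+1 < 2 * q)%N -> n.+1 = (m ^ 2)%N ->
  exists X y : int, [/\ (R_nn n)`_0 = q%:Z * q%:Z * X, ~~ (q%:Z %| y)%Z &
     (q%:Z %| X * W0 (n - q) - y * y)%Z].
Proof.
move=> pq oq h1 h2 hm.
have eq2 := odd_double_half q; rewrite oq in eq2.
have hqm : ~~ (q %| m)%N.
  apply/negP => /dvdnP [c hc]; move: hm; rewrite hc => hm.
  have : (q %| n.+1)%N by rewrite hm; apply/dvdnP; exists (c * c * q)%N; ring.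
  rewrite dvd_small; [move/eqP; lia|lia|lia].
have en := odd_double_half n.
case on: (odd n) en => /= en.
-
  move: (n./2) en => a en.
  have hd : (q %| df a.+1)%N by rewrite DF1 //; clear -en eq2 h1 h2; lia.
  have hd2 : ~~ (q * q %| df a.+1)%N by apply: DF2 => //; clear -en eq2 h1 h2; lia.
  have [D eD] : exists D, df a.+1 = (D * q)%N by exists (df a.+1 %/ q)%N; rewrite divnK.
  have hD : ~~ (q %| D)%N.
    apply/negP => /dvdnP [c hc]; move/negP: hd2; apply; rewrite eD hc.
    by apply/dvdnP; exists c; ring.
  have et := odd_double_half (n - q).
  rewrite oddB // on oq /= add0n in et.
  move: ((n - q)./2) et => b et.
  have hb : ~~ (q %| df b)%N by rewrite DF1 //; clear -et eq2 h1 h2; lia.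
  exists ((D * D)%N%:Z), ((m * D * df b)%N%:Z); split.
  + rewrite R0_W0 -en add1n W0_odd !PoszM eD PoszM; ring.
  + exact: ndvd_mul3.
  + rewrite -et W0_even dfS.
    have hrel : Posz (2 * b + 1) = (m%:Z * m%:Z - q%:Z)%R.
      have : (2 * b + 1 + q = m * m)%N by rewrite -mulnn in hm; clear -hm et h1; lia.
      move=> h; apply/eqP; rewrite eq_sym subr_eq; apply/eqP.
      by rewrite -!PoszM -!PoszD -h.
    have e3 : Posz (df b * (df b * (2 * b + 1))) =
              ((df b)%:Z * (df b)%:Z * (m%:Z * m%:Z - q%:Z))%R.
      by rewrite -hrel !PoszM mulrA.
    rewrite e3 !PoszM; apply/dvdzP; exists (-(D%:Z * D%:Z * (df b)%:Z * (df b)%:Z))%R; ring.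
-
  move: (n./2) en => a en.
  rewrite add0n in en.
  have hd : (q %| df a)%N by rewrite DF1 //; clear -en eq2 h1 h2 oq on; lia.
  have hd2 : ~~ (q * q %| df a)%N by apply: DF2 => //; clear -en eq2 h1 h2; lia.
  have [D eD] : exists D, df a = (D * q)%N by exists (df a %/ q)%N; rewrite divnK.
  have hD : ~~ (q %| D)%N.
    apply/negP => /dvdnP [c hc]; move/negP: hd2; apply; rewrite eD hc.
    by apply/dvdnP; exists c; ring.
  have et := odd_double_half (n - q).
  rewrite oddB // on oq /= in et.
  move: ((n - q)./2) et => b et.
  have hb : ~~ (q %| df b.+1)%N by rewrite DF1 //; clear -et eq2 h1 h2; lia.
  exists ((m * m * D * D)%N%:Z), ((m * D * df b.+1)%N%:Z); split.
  + rewrite R0_W0 -en W0_even dfS.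
    have -> : (2 * a + 1 = m * m)%N by rewrite -mulnn in hm; clear -hm en; lia.
    rewrite eD !PoszM; ring.
  + exact: ndvd_mul3.
  + rewrite -et add1n W0_odd !PoszM; apply/dvdzP; exists 0; ring.
Qed.

Lemma conv_low (K : nzRingType) (a b : nat -> K) i j m :
  (forall k, (k < i)%N -> a k = 0) -> (forall l, (l < j)%N -> b l = 0) -> (m < i + j)%N ->
  \sum_(k < m.+1) a k * b (m - k)%N = 0.
Proof.
move=> ha hb hm; apply: big1 => k _.
case: (ltnP k i) => hk; first by rewrite ha ?mul0r.
by rewrite hb ?mulr0 //; have := ltn_ord k; lia.
Qed.

Lemma conv_eq (K : nzRingType) (a b : nat -> K) i j :
  (forall k, (k < i)%N -> a k = 0) -> (forall l, (l < j)%N -> b l = 0) ->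
  \sum_(k < (i + j).+1) a k * b (i + j - k)%N = a i * b j.
Proof.
move=> ha hb.
have hi : (i < (i + j).+1)%N by lia.
rewrite (bigD1 (Ordinal hi)) //= big1 ?addr0; first by rewrite addKn.
move=> k /eqP hk; have hk' : nat_of_ord k != i by apply/eqP => e; apply: hk; apply: val_inj.
case: (ltnP k i) => h; first by rewrite ha ?mul0r.
rewrite hb ?mulr0 //; have := ltn_ord k; move/eqP: hk'; lia.
Qed.

Lemma no_sqrt_m1 q (z : 'F_q) : prime q -> (q %% 4 = 3)%N -> z ^+ 2 != -1.
Proof.
move=> pq hq; apply/negP => /eqP hz.
have h2 : (2%:R : 'F_q) != 0.
  have := dvdz_pcharf (pchar_Fp pq) 2; rewrite /= => <-.
  rewrite dvdzE /=; apply/negP => /dvdn_leq h; have {}h := h isT.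
  have := prime_gt1 pq. have := hq. lia.
have ez := expf_card z; rewrite card_Fp // in ez.
have eq : q = (2 * (2 * (q %/ 4) + 1) + 1)%N by have := divn_eq q 4; rewrite hq; lia.
have {}ez : z ^+ (2 * (2 * (q %/ 4) + 1) + 1) = z by rewrite -eq.
rewrite exprD exprM hz exprD exprM expr2 mulrNN mulr1 expr1n mul1r !expr1 in ez.
have : z *+ 2 = 0 by rewrite mulr2n -{1}ez mulN1r addNr.
rewrite -mulr_natr => /eqP; rewrite mulf_eq0 (negbTE h2) orbF => /eqP hz0.
by move: hz; rewrite hz0 expr0n /= => /eqP; rewrite eq_sym oppr_eq0 oner_eq0.
Qed.

Lemma factor_arg (q n : nat) (R P Q : {poly int}) (X y : int) :
  prime q -> (q %% 4 = 3)%N -> (n < 2 * q)%N -> (2 * n < 3 * q)%N ->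
  R = P * Q -> (size R <= (2 * n).+1)%N ->
  (forall m, (m <= q)%N -> (q%:Z * q%:Z %| R`_m)%Z) ->
  (forall m, (m < 2 * q)%N -> (q%:Z %| R`_m)%Z) ->
  R`_0 = q%:Z * q%:Z * X -> ~~ (q%:Z %| y)%Z -> (q%:Z %| X * R`_(2 * q) - y * y)%Z ->
  (q <= (size P).-1)%N -> ((size P).-1 <= n)%N -> False.
Proof.
move=> pq hq4 hn2 hn3 hRPQ hsz hlow hmod hR0 hy hXR hs1 hs2.
pose phi (x : int) : 'F_q := x%:~R.
have dv : forall x, (q%:Z %| x)%Z = (phi x == 0) := dvdz_pcharf (pchar_Fp pq).
have phiM : forall x z, phi (x * z) = phi x * phi z by move=> x z; rewrite /phi intrM.
have phiB : forall x z, phi (x - z) = phi x - phi z by move=> x z; rewrite /phi rmorphB.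
have phiD : forall x z, phi (x + z) = phi x + phi z by move=> x z; rewrite /phi rmorphD.
have hRm : forall m, phi (R`_m) = \sum_(k < m.+1) phi (P`_k) * phi (Q`_(m - k)).
  by move=> m; rewrite hRPQ coefM /phi rmorph_sum; apply: eq_bigr => k _; rewrite rmorphM.
have hyn : phi y != 0 by rewrite -dv.
have hXR' : phi X * phi (R`_(2 * q)) = phi y * phi y.
  by apply/eqP; rewrite -subr_eq0 -phiM -phiM -phiB -dv.
have h2q : phi (R`_(2 * q)) != 0.
  by apply/negP => /eqP h; move: hXR'; rewrite h mulr0 => /eqP; rewrite eq_sym mulf_eq0 orbb (negbTE hyn).
have hXn : phi X != 0.
  by apply/negP => /eqP h; move: hXR'; rewrite h mul0r => /eqP; rewrite eq_sym mulf_eq0 orbb (negbTE hyn).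
have hq0 : q%:Z != 0 by clear -pq; rewrite eqz_nat; have := prime_gt0 pq; lia.
have exP : exists i, phi (P`_i) != 0.
  case: (boolP [exists k : 'I_(2 * q).+1, phi (P`_k) != 0]) => [/existsP [k hk]|h].
    by exists k.
  exfalso; move/negP: h2q; apply; apply/eqP; rewrite hRm; apply: big1 => k _.
  move: h; rewrite negb_exists => /forallP /(_ k); rewrite negbK => /eqP ->.
  by rewrite mul0r.
have exQ : exists j, phi (Q`_j) != 0.
  case: (boolP [exists k : 'I_(2 * q).+1, phi (Q`_k) != 0]) => [/existsP [k hk]|h].
    by exists k.
  exfalso; move/negP: h2q; apply; apply/eqP; rewrite hRm; apply: big1 => k _.
  have hk : (2 * q - k < (2 * q).+1)%N by rewrite ltnS leq_subr.
  move: h; rewrite negb_exists => /forallP /(_ (Ordinal hk)); rewrite negbK /= => /eqP ->.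
  by rewrite mulr0.
case: (ex_minnP exP) => i hi hminP.
case: (ex_minnP exQ) => j hj hminQ.
have lowP : forall k, (k < i)%N -> phi (P`_k) = 0.
  move=> k hk; apply/eqP; apply/negPn; apply/negP => h; by move: (hminP k h); rewrite leqNgt hk.
have lowQ : forall k, (k < j)%N -> phi (Q`_k) = 0.
  move=> k hk; apply/eqP; apply/negPn; apply/negP => h; by move: (hminQ k h); rewrite leqNgt hk.
have hij : (i + j = 2 * q)%N.
  case: (ltngtP (i + j) (2 * q)) => // h.
  - have : phi (R`_(i + j)) != 0.
      by rewrite hRm (conv_eq (a:=fun k => phi (P`_k)) (b:=fun l => phi (Q`_l)) lowP lowQ) mulf_neq0.
    by rewrite -dv hmod.
  - by exfalso; move/negP: h2q; apply; apply/eqP; rewrite hRm (conv_low (a:=fun k => phi (P`_k)) (b:=fun l => phi (Q`_l)) lowP lowQ).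
have hiP : (i < size P)%N.
  by rewrite ltnNge; apply/negP => h; move: hi; rewrite nth_default // /phi /= eqxx.
have hjQ : (j < size Q)%N.
  by rewrite ltnNge; apply/negP => h; move: hj; rewrite nth_default // /phi /= eqxx.
have hP0 : P != 0 by apply/negP => /eqP h; move: hiP; rewrite h size_poly0.
have hQ0 : Q != 0 by apply/negP => /eqP h; move: hjQ; rewrite h size_poly0.
have hsPQ : (size P + size Q <= (2 * n).+2)%N.
  move: hsz; rewrite hRPQ size_mul // => h.
  have h2 : ((size P + size Q).-1 <= (2 * n).+1)%N := h.
  clear -h2; lia.
have hi0 : (0 < i)%N by clear -hij hjQ hsPQ hs1 hn3 hiP; lia.
have hj0 : (0 < j)%N by clear -hij hiP hs2 hn2; lia.
have [a ea] : exists a, P`_0 = a * q%:Z.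
  by exists (P`_0 %/ q%:Z)%Z; rewrite divzK // dv lowP.
have [b eb] : exists b, Q`_0 = b * q%:Z.
  by exists (Q`_0 %/ q%:Z)%Z; rewrite divzK // dv lowQ.
have eX : X = a * b.
  apply: (mulIf (mulf_neq0 hq0 hq0)); rewrite mulrC -hR0 hRPQ coef0M ea eb; ring.
have han : phi a != 0 by apply/negP => /eqP h; move: hXn; rewrite eX phiM h mul0r eqxx.
have hbn : phi b != 0 by apply/negP => /eqP h; move: hXn; rewrite eX phiM h mulr0 eqxx.
have dvq2 : forall u v, (q%:Z %| u)%Z -> (q%:Z %| v)%Z -> (q%:Z * q%:Z %| u * v)%Z.
  by move=> u v; apply: dvdz_mul.
case: (ltngtP i j) => hcmp.
-
  have := hlow i ltac:(clear -hij hcmp; lia).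
  rewrite hRPQ coefM big_ord_recr /= subnn eb rpredDl.
    by rewrite mulrA dvdz_mul2r // dv phiM mulf_eq0 (negbTE hi) (negbTE hbn).
  apply: rpred_sum => k _; apply: dvq2; rewrite dv.
    by rewrite lowP.
  by rewrite lowQ //; exact: leq_ltn_trans (leq_subr k i) hcmp.
-
  have := hlow j ltac:(clear -hij hcmp; lia).
  rewrite hRPQ coefM big_ord_recl /= subn0 ea rpredDr.
    by rewrite mulrAC dvdz_mul2r // dv phiM mulf_eq0 (negbTE han) (negbTE hj).
  apply: rpred_sum => k _; apply: dvq2; rewrite dv.
    by rewrite lowP //; exact: leq_ltn_trans (ltn_ord k) hcmp.
  by rewrite lowQ // ltn_subrL hj0.
-
  have hiq : i = q by clear -hij hcmp; lia.
  have hjq : j = q by clear -hij hcmp; lia.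
  subst i j.
  have hq' : exists q', q = q'.+1 by exists q.-1; rewrite prednK // prime_gt0.
  case: hq' => q' eq'.
  subst q.
  have hmid : (q'.+1%:Z * q'.+1%:Z %| P`_0 * Q`_q'.+1 + P`_q'.+1 * Q`_0)%Z.
    have := hlow q'.+1 (leqnn _).
    rewrite hRPQ coefM big_ord_recl big_ord_recr /= subn0.
    have eb0 : bump 0 q' = q'.+1 by rewrite /bump leq0n add1n.
    rewrite eb0 subnn addrCA rpredDl //.
    apply: rpred_sum => k _; apply: dvq2; rewrite dv.
      by rewrite lowP // /bump leq0n add1n ltnS ltn_ord.
    by rewrite lowQ // /bump leq0n add1n subSS ltnS leq_subr.
  have hlin : phi a * phi (Q`_q'.+1) + phi (P`_q'.+1) * phi b = 0.
    move: hmid; rewrite ea eb.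
    have -> : a * q'.+1%:Z * Q`_q'.+1 + P`_q'.+1 * (b * q'.+1%:Z) = (a * Q`_q'.+1 + P`_q'.+1 * b) * q'.+1%:Z by ring.
    by rewrite dvdz_mul2r // dv phiD !phiM => /eqP.
  have hR2 : phi (R`_(2 * q'.+1)) = phi (P`_q'.+1) * phi (Q`_q'.+1).
    have e2 : (2 * q'.+1 = q'.+1 + q'.+1)%N by rewrite mul2n addnn.
    by rewrite e2 hRm (conv_eq (a:=fun k => phi (P`_k)) (b:=fun l => phi (Q`_l)) lowP lowQ).
  set s := phi (P`_q'.+1) * phi b.
  have hs : s != 0 by rewrite mulf_neq0.
  have hys : phi y * phi y = - (s * s).
    rewrite -hXR' hR2 eX phiM.
    have ha : phi a * phi (Q`_q'.+1) = - s by apply/eqP; rewrite -addr_eq0 hlin.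
    transitivity ((phi a * phi (Q`_q'.+1)) * s); first by rewrite /s; ring.
    by rewrite ha mulNr.
  have := no_sqrt_m1 (phi y / s) pq hq4.
  have -> : (phi y / s) ^+ 2 = (phi y * phi y) / (s * s) by rewrite expr2; field.
  by rewrite hys mulNr divff ?eqxx // mulf_neq0.
Qed.

Lemma size_R n : (size (R_nn n) <= (2 * n).+1)%N.
Proof.
apply/leq_sizeP => m hm; rewrite R_coef big1 ?sub0r ?big1 ?oppr0 // => i _.
- have hi : (i <= m)%N by rewrite -ltnS ltn_ord.
  case: (ltnP n i.+1) => h; first by rewrite (cH_gt (k:=n) (d:=i.+1) h) mul0rn mul0r.
  by rewrite (cH_gt (k:=n.+1)) ?mulr0 //; lia.
- have hi : (i <= m)%N by rewrite -ltnS ltn_ord.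
  case: (ltnP n i) => h; first by rewrite (cH_gt (k:=n) (d:=i) h) mul0r.
  by rewrite (cH_gt (k:=n.+1)) ?mul0rn ?mulr0 //; lia.
Qed.

Unset Implicit Arguments.
Local Close Scope ring_scope.

Theorem mainTheorem14 (n q : nat) :
  (3 <= n)%N ->
  (exists m : nat, n.+1 = (m ^ 2)%N) ->
  prime q -> (q <= n)%N -> (2 * n < 3 * q)%N -> q %% 4 = 3 ->
  forall p : {poly int}, divides_in_Zx p (R_nn n) ->
    ~ ((q <= (size p).-1)%N && ((size p).-1 <= n)%N).
Proof.
move=> h3 [m hm] pq hqn hn3 hq4 p [r hr] /andP [hs1 hs2].
have oq : odd q.
  have e := divn_eq q 4; rewrite hq4 in e; rewrite e oddD oddM andbF //.
have hq1 := prime_gt1 pq.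
have hn2 : (n.+1 < 2 * q)%N by clear -hn3 hq1; lia.
have [hmod hcong] := R_mod pq oq hqn.
have [X [y [hR0 hy hXW]]] := R_sq pq oq hqn hn2 hm.
apply: (factor_arg (n:=n) (R:=R_nn n) (P:=p) (Q:=r) (X:=X) (y:=y) pq hq4) => //.
- by clear -hn3 hq1; lia.
- exact: size_R.
- by move=> k hk; apply: R_low.
- have -> : (X * (R_nn n)`_(2 * q) - y * y =
            X * ((R_nn n)`_(2 * q) - W0 (n - q)) + (X * W0 (n - q) - y * y))%R by ring.
  by apply: rpredD => //; apply: dvdz_mull.
Qed.
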